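(* Let $m,n\in\mathbb{N}$ be coprime with $1\le m\le n-1$, and let $\Gamma$ be a $\mathbb{D}_n$-symmetric billiard curve with equivariant parametrization $\gamma$. Let $Z_i=\gamma(X_i)$ be a $\mathbb{D}_n$-symmetric, Birkhoff, $n$-periodic billiard orbit of rotation number $\frac mn$. Let $(p,q)=s(n,m)$ with $s\in\mathbb{N}$, so that $X\in\mathbb{X}_{n,m}\subset\mathbb{X}_{p,q}$. Consider the Hessian of $$W_{p,q}(x_1,\dots,x_p)=\sum_{j=1}^{p-1}L(x_j,x_{j+1})+L(x_p,x_1+q)$$ at $(X_1,\dots,X_p)$. Then: - The Hessian is the symmetric tridiagonal circulant $p\times p$ matrix with diagonal entries $2\alpha$, and entries $\beta$ on the sub- and superdiagonals and in the two corners $(1,p),(p,1)$. Here $\alpha=\partial_{2,2}L(X_{i-1},X_i)=\partial_{1,1}L(X_i,X_{i+1})$ and $\beta=\partial_{1,2}L(X_i,X_{i+1})$ are independent of $i$. - For every $N\in\mathbb{Z}$, the vectors $v_i=\sin(2\pi Ni/p)$ and $w_i=\cos(2\pi Ni/p)$ ($i=1,\dots,p$) are eigenvectors with eigenvalue $2\alpha+2\beta\cos(2\pi N/p)$. - If $\gamma$ has constant speed $\|\gamma'\|\equiv c$, then $$\alpha=c^2\sin(m\pi/n)\Big(\frac{\sin(m\pi/n)}{L}-\kappa\Big),\qquad \beta=\frac{c^2\sin^2(m\pi/n)}{L},$$ where $L=\|Z_{i+1}-Z_i\|$ and $\kappa=\kappa(Z_i)$ (both independent of $i$).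
   Context: $\mathbb{D}_n=\langle R,S\rangle$, where $R$ is rotation by $2\pi/n$ and $S$ is the horizontal reflection. $\Gamma$ is a $C^2$ simple closed $\mathbb{D}_n$-invariant curve bounding a strictly convex domain, parametrized counterclockwise by a $1$-periodic $C^2$ immersion $\gamma$ descending to an embedding of $\mathbb{R}/\mathbb{Z}$, with $\gamma(x+1/n)=R\gamma(x)$ and $\gamma(-x)=S\gamma(x)$. $L(x,X)=\|\gamma(x)-\gamma(X)\|$, $\mathbb{X}_{p,q}=\{x:x_{i+p}=x_i+q\}$, and $\kappa$ is curvature. A billiard orbit satisfies the reflection law at each point, with lift $X$ ($\gamma(X_i)=Z_i$, $0<X_{i+1}-X_i<1$). $\mathbb{D}_n$-symmetric means each $g\in\mathbb{D}_n$ maps $Z_i$ to $Z_{k+i}$ for all $i$, or to $Z_{k-i}$ for all $i$, for some $k$. Birkhoff means $X_i\le X_j+l\Rightarrow X_{i+m}\le X_{j+m}+l$ for all integers. *)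

(* Defs.v *)
From Stdlib Require Import Reals Lra ZArith.
From Coquelicot Require Import Coquelicot.
Open Scope R_scope.

Definition pt := (R * R)%type.
Definition psub (a b : pt) : pt := (fst a - fst b, snd a - snd b).
Definition dot (a b : pt) : R := fst a * fst b + snd a * snd b.
Definition pnorm (a : pt) : R := sqrt (dot a a).
Definition pscale (c : R) (a : pt) : pt := (c * fst a, c * snd a).
Definition cross (a b : pt) : R := fst a * snd b - snd a * fst b.

Definition rot (th : R) (a : pt) : pt :=
  (cos th * fst a - sin th * snd a, sin th * fst a + cos th * snd a).
Definition reflS (a : pt) : pt := (fst a, - snd a).

(* The element R^a S^b of D_n acting on the plane. *)
Definition dn_act (n a : nat) (b : bool) (z : pt) : pt :=
  rot (2 * PI * INR a / INR n) (if b then reflS z else z).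

Definition C2 (f : R -> R) : Prop :=
  forall x, ex_derive f x /\ ex_derive (Derive f) x /\ continuous (Derive (Derive f)) x.

Definition gx (g : R -> pt) (t : R) : R := fst (g t).
Definition gy (g : R -> pt) (t : R) : R := snd (g t).
Definition dvel (g : R -> pt) (t : R) : pt := (Derive (gx g) t, Derive (gy g) t).
Definition kappa (g : R -> pt) (t : R) : R :=
  (Derive (gx g) t * Derive (Derive (gy g)) t - Derive (gy g) t * Derive (Derive (gx g)) t)
  / (pnorm (dvel g t)) ^ 3.

(* gamma : R -> R^2 is a 1-periodic C^2 immersion, injective modulo 1 (an embedding of
   R/Z), counterclockwise, bounding a strictly convex domain (every other point of the
   curve lies strictly to the left of each oriented tangent line), and D_n-equivariant:
   gamma(x + 1/n) = R gamma(x), gamma(-x) = S gamma(x). *)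
Definition dn_billiard_curve (n : nat) (g : R -> pt) : Prop :=
  C2 (gx g) /\ C2 (gy g) /\
  (forall t, g (t + 1) = g t) /\
  (forall s t, g s = g t -> exists k : Z, s - t = IZR k) /\
  (forall t, dvel g t <> (0, 0)) /\
  (forall s t, (forall k : Z, s - t <> IZR k) -> cross (dvel g t) (psub (g s) (g t)) > 0) /\
  (forall t, g (t + 1 / INR n) = rot (2 * PI / INR n) (g t)) /\
  (forall t, g (- t) = reflS (g t)).

Definition Lf (g : R -> pt) (x y : R) : R := pnorm (psub (g x) (g y)).

Definition d11 (F : R -> R -> R) (a b : R) : R :=
  Derive (fun t => Derive (fun u => F u b) t) a.
Definition d22 (F : R -> R -> R) (a b : R) : R :=
  Derive (fun t => Derive (fun u => F a u) t) b.
Definition d12 (F : R -> R -> R) (a b : R) : R :=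
  Derive (fun t => Derive (fun u => F t u) b) a.

(* Billiard orbit with lift X : Z -> R, Z_i = gamma(X_i), 0 < X_{i+1} - X_i < 1,
   reflection law at every point: the incoming and outgoing unit directions make the
   same angle with the tangent gamma'(X_i). *)
Definition unitv (a : pt) : pt := pscale (/ pnorm a) a.
Definition billiard_orbit (g : R -> pt) (X : Z -> R) : Prop :=
  (forall i : Z, 0 < X (i + 1)%Z - X i < 1) /\
  (forall i : Z,
     dot (unitv (psub (g (X i)) (g (X (i - 1)%Z)))) (dvel g (X i))
     = dot (unitv (psub (g (X (i + 1)%Z)) (g (X i)))) (dvel g (X i))).

Definition in_Xpq (p : Z) (q : R) (X : Z -> R) : Prop :=
  forall i : Z, X (i + p)%Z = X i + q.

Definition birkhoff (X : Z -> R) : Prop :=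
  forall i j l k : Z, X i <= X j + IZR l -> X (i + k)%Z <= X (j + k)%Z + IZR l.

Definition dn_symmetric (n : nat) (g : R -> pt) (X : Z -> R) : Prop :=
  forall (a : nat) (b : bool), exists k : Z,
    (forall i : Z, dn_act n a b (g (X i)) = g (X (k + i)%Z)) \/
    (forall i : Z, dn_act n a b (g (X i)) = g (X (k - i)%Z)).

Fixpoint sumR (f : nat -> R) (k : nat) : R :=
  match k with O => 0 | S k' => sumR f k' + f k' end.

(* W_{p,q}(x_1,...,x_p) for x : nat -> R (coordinates x 1 .. x p) *)
Definition Wpq (g : R -> pt) (p : nat) (q : R) (x : nat -> R) : R :=
  sumR (fun j => Lf g (x (j + 1)%nat) (x (j + 2)%nat)) (p - 1) + Lf g (x p) (x 1%nat + q).

Definition upd (x : nat -> R) (j : nat) (t : R) : nat -> R :=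
  fun i => if Nat.eqb i j then t else x i.
Definition partial (F : (nat -> R) -> R) (k : nat) (x : nat -> R) : R :=
  Derive (fun t => F (upd x k t)) (x k).
Definition hess (F : (nat -> R) -> R) (x : nat -> R) (j k : nat) : R :=
  Derive (fun t => partial F k (upd x j t)) (x j).

Definition vecX (X : Z -> R) : nat -> R := fun i => X (Z.of_nat i).

(* symmetric tridiagonal circulant p x p matrix (indices 1..p): 2a on the diagonal,
   b at positions (j,k) with j - k = +-1 mod p (including the corners (1,p),(p,1)). *)
Definition circ (p : nat) (a b : R) (j k : nat) : R :=
  (if Nat.eqb j k then 2 * a else 0)
  + (if Z.eqb (Z.modulo (Z.of_nat j - Z.of_nat k) (Z.of_nat p)) 1 then b else 0)
  + (if Z.eqb (Z.modulo (Z.of_nat k - Z.of_nat j) (Z.of_nat p)) 1 then b else 0).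

(* Main.v *)
Require Import Defs.
From Stdlib Require Import Reals Lra Lia ZArith Psatz Znumtheory.
From Coquelicot Require Import Coquelicot.
Open Scope R_scope.

Definition Dsq (g : R -> pt) x y :=
  (gx g x - gx g y) * (gx g x - gx g y) + (gy g x - gy g y) * (gy g x - gy g y).
Lemma Lf_alt g x y : Lf g x y = sqrt (Dsq g x y).
Proof. reflexivity. Qed.

Definition NL1 g x y := (gx g x - gx g y) * Derive (gx g) x + (gy g x - gy g y) * Derive (gy g) x.
Definition NL2 g x y := (gx g y - gx g x) * Derive (gx g) y + (gy g y - gy g x) * Derive (gy g) y.
Definition PL1 g x y := NL1 g x y / Lf g x y.
Definition PL2 g x y := NL2 g x y / Lf g x y.
Definition QL11 g x y :=
  (Derive (gx g) x ^ 2 + Derive (gy g) x ^ 2 + (gx g x - gx g y) * Derive (Derive (gx g)) x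
   + (gy g x - gy g y) * Derive (Derive (gy g)) x) / Lf g x y - NL1 g x y ^ 2 / Lf g x y ^ 3.
Definition QL12 g x y :=
  (- (Derive (gx g) x * Derive (gx g) y) - Derive (gy g) x * Derive (gy g) y) / Lf g x y
  - NL1 g x y * NL2 g x y / Lf g x y ^ 3.
Definition QL22 g x y :=
  (Derive (gx g) y ^ 2 + Derive (gy g) y ^ 2 + (gx g y - gx g x) * Derive (Derive (gx g)) y
   + (gy g y - gy g x) * Derive (Derive (gy g)) y) / Lf g x y - NL2 g x y ^ 2 / Lf g x y ^ 3.

Definition smooth2 (g : R -> pt) := forall t,
  ex_derive (gx g) t /\ ex_derive (Derive (gx g)) t /\
  ex_derive (gy g) t /\ ex_derive (Derive (gy g)) t.

Lemma Dsq_pos_L g x y : 0 < Dsq g x y -> 0 < Lf g x y.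
Proof. intros; rewrite Lf_alt; apply sqrt_lt_R0; auto. Qed.

Lemma Lf_sq g x y : Lf g x y * Lf g x y = Dsq g x y.
Proof. rewrite Lf_alt; apply sqrt_sqrt. unfold Dsq. pose proof (Rle_0_sqr (gx g x - gx g y)); pose proof (Rle_0_sqr (gy g x - gy g y)); unfold Rsqr in *; lra. Qed.

Lemma dL1 g x y : smooth2 g -> 0 < Dsq g x y -> is_derive (fun u => Lf g u y) x (PL1 g x y).
Proof.
  intros Hs Hp.
  apply is_derive_ext with (fun u => sqrt ((gx g u - gx g y) * (gx g u - gx g y) + (gy g u - gy g y) * (gy g u - gy g y))).
  { intros; reflexivity. }
  pose proof (Hs x) as (H1 & H2 & H3 & H4).
  unfold PL1, NL1. rewrite Lf_alt. unfold Dsq in *.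
  auto_derive.
  - repeat split; auto; lra.
  - 
    assert (0 < sqrt ((gx g x - gx g y) * (gx g x - gx g y) + (gy g x - gy g y) * (gy g x - gy g y))) by (apply sqrt_lt_R0; auto).
    unfold Rminus in *. change (fun x0 => gx g x0) with (gx g). change (fun x0 => gy g x0) with (gy g).
    set (S := sqrt _) in *. field. lra.
Qed.

Ltac cleanad g := unfold Rminus in *;
  change (fun x0 => gx g x0) with (gx g) in *; change (fun x0 => gy g x0) with (gy g) in *;
  change (fun x0 => Derive (gx g) x0) with (Derive (gx g)) in *;
  change (fun x0 => Derive (gy g) x0) with (Derive (gy g)) in *.

Lemma dL2 g x y : smooth2 g -> 0 < Dsq g x y -> is_derive (fun u => Lf g x u) y (PL2 g x y).
Proof.
  intros Hs Hp.
  apply is_derive_ext with (fun u => sqrt ((gx g x - gx g u) * (gx g x - gx g u) + (gy g x - gy g u) * (gy g x - gy g u))).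
  { intros; reflexivity. }
  pose proof (Hs y) as (H1 & H2 & H3 & H4).
  unfold PL2, NL2. rewrite Lf_alt. unfold Dsq in *.
  auto_derive.
  - repeat split; auto; lra.
  - assert (0 < sqrt ((gx g x - gx g y) * (gx g x - gx g y) + (gy g x - gy g y) * (gy g x - gy g y))) by (apply sqrt_lt_R0; auto).
    cleanad g. set (S := sqrt _) in *. field. lra.
Qed.

Lemma dQ11 g x y : smooth2 g -> 0 < Dsq g x y -> is_derive (fun u => PL1 g u y) x (QL11 g x y).
Proof.
  intros Hs Hp.
  apply is_derive_ext with (fun u => ((gx g u - gx g y) * Derive (gx g) u + (gy g u - gy g y) * Derive (gy g) u) / sqrt ((gx g u - gx g y) * (gx g u - gx g y) + (gy g u - gy g y) * (gy g u - gy g y))).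
  { intros; reflexivity. }
  pose proof (Hs x) as (H1 & H2 & H3 & H4).
  unfold QL11, NL1. rewrite Lf_alt. unfold Dsq in *.
  auto_derive.
  - repeat split; auto; try lra. apply Rgt_not_eq. apply sqrt_lt_R0; lra.
  - assert (HS: 0 < sqrt ((gx g x - gx g y) * (gx g x - gx g y) + (gy g x - gy g y) * (gy g x - gy g y))) by (apply sqrt_lt_R0; auto).
    pose proof (sqrt_sqrt ((gx g x - gx g y) * (gx g x - gx g y) + (gy g x - gy g y) * (gy g x - gy g y)) ltac:(lra)) as HSS.
    cleanad g. set (S := sqrt _) in *. field. lra.
Qed.

Lemma dQ12 g x y : smooth2 g -> 0 < Dsq g x y -> is_derive (fun u => PL1 g x u) y (QL12 g x y).
Proof.
  intros Hs Hp.
  apply is_derive_ext with (fun u => ((gx g x - gx g u) * Derive (gx g) x + (gy g x - gy g u) * Derive (gy g) x) / sqrt ((gx g x - gx g u) * (gx g x - gx g u) + (gy g x - gy g u) * (gy g x - gy g u))).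
  { intros; reflexivity. }
  pose proof (Hs y) as (H1 & H2 & H3 & H4).
  unfold QL12, NL1, NL2. rewrite Lf_alt. unfold Dsq in *.
  auto_derive.
  - repeat split; auto; try lra. apply Rgt_not_eq. apply sqrt_lt_R0; lra.
  - assert (HS: 0 < sqrt ((gx g x - gx g y) * (gx g x - gx g y) + (gy g x - gy g y) * (gy g x - gy g y))) by (apply sqrt_lt_R0; auto).
    cleanad g. set (S := sqrt _) in *. field. lra.
Qed.

Lemma dQ21 g x y : smooth2 g -> 0 < Dsq g x y -> is_derive (fun u => PL2 g u y) x (QL12 g x y).
Proof.
  intros Hs Hp.
  apply is_derive_ext with (fun u => ((gx g y - gx g u) * Derive (gx g) y + (gy g y - gy g u) * Derive (gy g) y) / sqrt ((gx g u - gx g y) * (gx g u - gx g y) + (gy g u - gy g y) * (gy g u - gy g y))).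
  { intros; reflexivity. }
  pose proof (Hs x) as (H1 & H2 & H3 & H4).
  unfold QL12, NL1, NL2. rewrite Lf_alt. unfold Dsq in *.
  auto_derive.
  - repeat split; auto; try lra. apply Rgt_not_eq. apply sqrt_lt_R0; lra.
  - assert (HS: 0 < sqrt ((gx g x - gx g y) * (gx g x - gx g y) + (gy g x - gy g y) * (gy g x - gy g y))) by (apply sqrt_lt_R0; auto).
    cleanad g. set (S := sqrt _) in *. field. lra.
Qed.

Lemma dQ22 g x y : smooth2 g -> 0 < Dsq g x y -> is_derive (fun u => PL2 g x u) y (QL22 g x y).
Proof.
  intros Hs Hp.
  apply is_derive_ext with (fun u => ((gx g u - gx g x) * Derive (gx g) u + (gy g u - gy g x) * Derive (gy g) u) / sqrt ((gx g x - gx g u) * (gx g x - gx g u) + (gy g x - gy g u) * (gy g x - gy g u))).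
  { intros; reflexivity. }
  pose proof (Hs y) as (H1 & H2 & H3 & H4).
  unfold QL22, NL2. rewrite Lf_alt. unfold Dsq in *.
  auto_derive.
  - repeat split; auto; try lra. apply Rgt_not_eq. apply sqrt_lt_R0; lra.
  - assert (HS: 0 < sqrt ((gx g x - gx g y) * (gx g x - gx g y) + (gy g x - gy g y) * (gy g x - gy g y))) by (apply sqrt_lt_R0; auto).
    cleanad g. set (S := sqrt _) in *. field. lra.
Qed.

Lemma pt_eq (a b : pt) : fst a = fst b -> snd a = snd b -> a = b.
Proof. destruct a, b; simpl; intros; subst; auto. Qed.

Lemma rot_rot a b z : rot a (rot b z) = rot (a + b) z.
Proof. destruct z as [z1 z2]; unfold rot; simpl; rewrite cos_plus, sin_plus; apply pt_eq; simpl; ring. Qed.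

Lemma rot_0 z : rot 0 z = z.
Proof. destruct z; unfold rot; simpl; rewrite cos_0, sin_0; apply pt_eq; simpl; ring. Qed.

Lemma dot_rot th a b : dot (rot th a) (rot th b) = dot a b.
Proof.
  destruct a as [a1 a2], b as [b1 b2]; unfold dot, rot; simpl.
  pose proof (sin2_cos2 th) as H. unfold Rsqr in H.
  transitivity ((sin th * sin th + cos th * cos th) * (a1 * b1 + a2 * b2)); [ring | rewrite H; ring].
Qed.

Lemma dot_refl a b : dot (reflS a) (reflS b) = dot a b.
Proof. destruct a, b; unfold dot, reflS; simpl; ring. Qed.

Lemma psub_rot th a b : psub (rot th a) (rot th b) = rot th (psub a b).
Proof. destruct a, b; unfold psub, rot; simpl; apply pt_eq; simpl; ring. Qed.

Lemma psub_refl a b : psub (reflS a) (reflS b) = reflS (psub a b).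
Proof. destruct a, b; unfold psub, reflS; simpl; apply pt_eq; simpl; ring. Qed.

Lemma gper_Z (g : R -> pt) : (forall t, g (t + 1) = g t) -> forall (k : Z) t, g (t + IZR k) = g t.
Proof.
  intros Hp k. induction k using Z.peano_ind; intros t.
  - rewrite Rplus_0_r; auto.
  - rewrite succ_IZR. replace (t + (IZR k + 1)) with ((t + IZR k) + 1) by ring. rewrite Hp; auto.
  - rewrite <- Z.sub_1_r, minus_IZR.
    replace (t + (IZR k - 1)) with ((t - 1) + IZR k) by ring. rewrite IHk.
    rewrite <- (Hp (t - 1)). f_equal; ring.
Qed.

Lemma gshift_Z (g : R -> pt) (n : nat) : (0 < INR n) ->
  (forall t, g (t + 1 / INR n) = rot (2 * PI / INR n) (g t)) ->
  forall (a : Z) t, g (t + IZR a / INR n) = rot (2 * PI * IZR a / INR n) (g t).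
Proof.
  intros Hn Hr a. induction a using Z.peano_ind; intros t.
  - replace (t + IZR 0 / INR n) with t by (simpl; field; lra).
    replace (2 * PI * IZR 0 / INR n) with 0 by (simpl; field; lra). rewrite rot_0; auto.
  - rewrite succ_IZR. replace (t + (IZR a + 1) / INR n) with ((t + IZR a / INR n) + 1 / INR n) by (field; lra).
    rewrite Hr, IHa, rot_rot. f_equal. field; lra.
  - rewrite <- Z.sub_1_r, minus_IZR.
    set (t' := t + (IZR a - 1) / INR n).
    assert (E : g (t' + 1 / INR n) = rot (2 * PI / INR n) (g t')) by apply Hr.
    replace (t' + 1 / INR n) with (t + IZR a / INR n) in E by (unfold t'; field; lra).
    rewrite IHa in E.
    assert (E2 : g t' = rot (- (2 * PI / INR n)) (rot (2 * PI * IZR a / INR n) (g t))).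
    { rewrite E, rot_rot. replace (- (2 * PI / INR n) + 2 * PI / INR n) with 0 by ring. rewrite rot_0; auto. }
    rewrite E2, rot_rot. f_equal. field; lra.
Qed.

Lemma Lf_shift g n : (0 < INR n) ->
  (forall t, g (t + 1 / INR n) = rot (2 * PI / INR n) (g t)) ->
  forall (a : Z) x y, Lf g (x + IZR a / INR n) (y + IZR a / INR n) = Lf g x y.
Proof.
  intros Hn Hr a x y. unfold Lf, pnorm. rewrite !(gshift_Z g n Hn Hr), psub_rot, dot_rot. auto.
Qed.

Lemma Lf_per g : (forall t, g (t + 1) = g t) ->
  forall (k1 k2 : Z) x y, Lf g (x + IZR k1) (y + IZR k2) = Lf g x y.
Proof. intros Hp k1 k2 x y. unfold Lf. rewrite !(gper_Z g Hp). auto. Qed.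

Lemma Lf_neg g : (forall t, g (- t) = reflS (g t)) -> forall x y, Lf g (- x) (- y) = Lf g x y.
Proof. intros Hr x y. unfold Lf, pnorm. rewrite !Hr, psub_refl, dot_refl. auto. Qed.

Lemma Lf_sym g x y : Lf g x y = Lf g y x.
Proof. unfold Lf, pnorm, dot, psub; simpl. f_equal. ring. Qed.

Lemma Derive_shift (f : R -> R) c x : Derive (fun t => f (t + c)) x = Derive f (x + c).
Proof. unfold Derive. f_equal. apply Lim_ext. intros h. f_equal. f_equal. f_equal. ring. Qed.

Definition cong (a b : R) := exists z : Z, a - b = IZR z.

Lemma int_small (z : Z) : -1 < IZR z < 1 -> z = 0%Z.
Proof. intros [H1 H2]. apply lt_IZR in H1. apply lt_IZR in H2. lia. Qed.

Lemma cong_eq a b : cong a b -> -1 < a - b < 1 -> a = b.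
Proof. intros [z Hz] H. rewrite Hz in H. apply int_small in H. subst. simpl in Hz. lra. Qed.

Lemma no_int_01 (z : Z) : 0 < IZR z < 1 -> False.
Proof. intros [H1 H2]. apply lt_IZR in H1. apply lt_IZR in H2. lia. Qed.

Lemma iterZ (X : Z -> R) (a : Z) (b : R) : (forall i, X (i + a)%Z = X i + b) ->
  forall u i, X (i + u * a)%Z = X i + IZR u * b.
Proof.
  intros H u. induction u using Z.peano_ind; intros i.
  - rewrite Z.add_0_r. simpl. ring.
  - rewrite succ_IZR. replace (i + Z.succ u * a)%Z with ((i + u * a) + a)%Z by lia.
    rewrite H, IHu. ring.
  - rewrite <- Z.sub_1_r, minus_IZR.
    assert (E := H (i + (u - 1) * a)%Z). replace (i + (u - 1) * a + a)%Z with (i + u * a)%Z in E by lia.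
    rewrite IHu in E. lra.
Qed.

Lemma Zall_from (P : Z -> Prop) (w : Z) : P w -> (forall i, P i -> P (i + 1)%Z) -> (forall i, P (i + 1)%Z -> P i) -> forall i, P i.
Proof.
  intros H0 Hs Hp i.
  assert (forall j, P (w + j)%Z).
  { intros j. induction j using Z.peano_ind.
    - rewrite Z.add_0_r; auto.
    - replace (w + Z.succ j)%Z with ((w + j) + 1)%Z by lia. auto.
    - apply Hp. replace (w + Z.pred j + 1)%Z with (w + j)%Z by lia. auto. }
  replace i with (w + (i - w))%Z by lia. auto.
Qed.

Lemma orbit_step (m n : nat) (g : R -> pt) (X : Z -> R) :
  (2 <= n)%nat -> (1 <= m)%nat -> (m <= n - 1)%nat ->
  (forall s t, g s = g t -> exists k : Z, s - t = IZR k) ->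
  (forall t, g (t + 1 / INR n) = rot (2 * PI / INR n) (g t)) ->
  (forall i : Z, 0 < X (i + 1)%Z - X i < 1) ->
  in_Xpq (Z.of_nat n) (INR m) X ->
  dn_symmetric n g X ->
  forall i, X (i + 1)%Z = X i + INR m / INR n.
Proof.
  intros Hn Hm1 Hm2 Hinj Hr Hd Hpq Hsym.
  assert (Hnr : 2 <= INR n) by (replace 2 with (INR 2) by (simpl; ring); apply le_INR; lia).
  assert (Hnz : IZR (Z.of_nat n) = INR n) by (rewrite INR_IZR_INZ; auto).
  destruct (Hsym 1%nat false) as [k Hk].
  assert (Hact : forall z, dn_act n 1 false z = rot (2 * PI / INR n) z).
  { intros z. unfold dn_act. f_equal. simpl. field. lra. }
  destruct Hk as [Hk | Hk].
  -
    assert (Hc : forall i, cong (X (k + i)%Z) (X i + 1 / INR n)).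
    { intros i. specialize (Hk i). rewrite Hact, <- Hr in Hk. symmetry in Hk. apply Hinj in Hk.
      destruct Hk as [z Hz]. first [exists z; lra | exists (-z)%Z; rewrite opp_IZR; lra]. }
    set (e := fun i => X (k + i)%Z - X i).
    assert (He1 : forall i, e (i + 1)%Z = e i).
    { intros i. unfold e. apply cong_eq.
      - destruct (Hc (i + 1)%Z) as [z1 H1]. destruct (Hc i) as [z2 H2].
        exists (z1 - z2)%Z. rewrite minus_IZR. lra.
      - pose proof (Hd i). pose proof (Hd (k + i)%Z).
        replace (k + (i + 1))%Z with (k + i + 1)%Z by lia. lra. }
    assert (He : forall i, e i = e 0%Z).
    { apply (Zall_from (fun i => e i = e 0%Z) 0%Z); auto.
      - intros i H. rewrite He1; auto.
      - intros i H. rewrite <- He1; auto. }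
    set (E := e 0%Z).
    assert (HE : forall i, X (i + k)%Z = X i + E).
    { intros i. pose proof (He i) as H. unfold E. unfold e in H |- *. rewrite (Z.add_comm i k). lra. }
    assert (HEc : cong E (1 / INR n)).
    { destruct (Hc 0%Z) as [z Hz]. exists z. unfold E, e. lra. }
    set (nz := Z.of_nat n) in *.
    set (G := Z.gcd k nz).
    destruct (Zis_gcd_bezout _ _ _ (Zgcd_is_gcd k nz)) as [u v Huv].
    set (h := IZR u * E + IZR v * INR m).
    assert (HG : forall i, X (i + G)%Z = X i + h).
    { intros i. fold G in Huv. rewrite <- Huv.
      replace (i + (u * k + v * nz))%Z with ((i + u * k) + v * nz)%Z by lia.
      rewrite (iterZ X nz (INR m) Hpq), (iterZ X k E HE). unfold h. ring. }
    destruct (Z.gcd_divide_r k nz) as [n' Hn']. fold G in Hn'.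
    destruct (Z.gcd_divide_l k nz) as [k' Hk']. fold G in Hk'.
    assert (Hnh : IZR n' * h = INR m).
    { pose proof (iterZ X G h HG n' 0%Z) as H1. rewrite <- Hn' in H1. rewrite Hpq in H1. lra. }
    assert (HEh : E = IZR k' * h).
    { pose proof (iterZ X G h HG k' 0%Z) as H1. rewrite <- Hk' in H1. rewrite HE in H1. lra. }
    assert (HGpos : (0 < G)%Z).
    { assert (0 <= G)%Z by apply Z.gcd_nonneg. destruct (Z.eq_dec G 0) as [H0|H0]; [|lia].
      unfold G in H0. apply Z.gcd_eq_0_r in H0. unfold nz in H0. lia. }
    assert (HnG : INR n = IZR n' * IZR G) by (rewrite <- Hnz, Hn', mult_IZR; ring).
    assert (HG1 : G = 1%Z).
    { destruct HEc as [z0 Hz0].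
      assert (Hw : / IZR G = IZR (k' * Z.of_nat m - n' * z0)).
      { rewrite minus_IZR, !mult_IZR, <- INR_IZR_INZ.
        assert (Hn'0 : IZR n' <> 0) by (intro Hc0; rewrite Hc0 in HnG; lra).
        assert (HG0 : IZR G <> 0) by (apply not_0_IZR; lia).
        rewrite <- Hnh. replace (IZR z0) with (E - 1 / INR n) by lra. rewrite HEh, HnG. field. split; auto. }
      destruct (Z.eq_dec G 1) as [|HG2]; auto. exfalso.
      assert (HG2' : 2 <= IZR G) by (apply IZR_le; lia).
      apply (no_int_01 (k' * Z.of_nat m - n' * z0)). rewrite <- Hw. split.
      + apply Rinv_0_lt_compat; lra.
      + rewrite <- Rinv_1. apply Rinv_lt_contravar; lra. }
    intros i. rewrite HG1 in HG, HnG. rewrite HG. f_equal.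
    rewrite HnG, <- Hnh. field. intro Hc0; rewrite Hc0 in HnG; lra.
  -
    assert (Hc : forall i, cong (X (k - i)%Z) (X i + 1 / INR n)).
    { intros i. specialize (Hk i). rewrite Hact, <- Hr in Hk. symmetry in Hk. apply Hinj in Hk.
      destruct Hk as [z Hz]. first [exists z; lra | exists (-z)%Z; rewrite opp_IZR; lra]. }
    assert (Hn2 : n = 2%nat).
    { destruct (Hc 0%Z) as [z1 H1]. destruct (Hc k) as [z2 H2].
      replace (k - k)%Z with 0%Z in H2 by lia. rewrite Z.sub_0_r in H1.
      assert (H3 : 2 / INR n = IZR (- (z1 + z2))) by (rewrite opp_IZR, plus_IZR; lra).
      assert (H4 : 0 < 2 / INR n) by (apply Rdiv_lt_0_compat; lra).
      assert (H5 : 2 / INR n <= 1) by (apply (Rmult_le_reg_r (INR n)); [lra|]; unfold Rdiv; rewrite Rmult_assoc, Rinv_l; lra).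
      destruct (Rle_lt_or_eq_dec _ _ H5) as [H6|H6].
      - exfalso. apply (no_int_01 (- (z1 + z2))). lra.
      - assert (INR n = 2) by (apply (Rmult_eq_reg_r (/ INR n)); [|apply Rinv_neq_0_compat; lra];
          rewrite Rinv_r by lra; unfold Rdiv in H6; lra).
        apply INR_eq. simpl. lra. }
    subst n. assert (Hm : m = 1%nat) by lia. subst m.
    assert (H2r : INR 2 = 2) by (simpl; ring). assert (H1r : INR 1 = 1) by (simpl; ring).
    rewrite H2r in Hc. rewrite H1r in Hpq.
    set (d := fun i => X (i + 1)%Z - X i).
    assert (Hdd : forall i, d i + d (i + 1)%Z = 1).
    { intros i. unfold d. replace (i + 1 + 1)%Z with (i + Z.of_nat 2)%Z by (simpl; lia). rewrite Hpq. ring. }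
    assert (Hsum : forall i, d (k - i - 1)%Z + d i = 1).
    { intros i. destruct (Hc i) as [z1 H1]. destruct (Hc (i + 1)%Z) as [z2 H2].
      pose proof (Hd i) as D1. pose proof (Hd (k - i - 1)%Z) as D2.
      replace (k - i - 1 + 1)%Z with (k - i)%Z in D2 by lia. replace (k - (i + 1))%Z with (k - i - 1)%Z in H2 by lia.
      assert (Hz : d (k - i - 1)%Z + d i = IZR (z1 - z2)) by (unfold d; rewrite minus_IZR; replace (k - i - 1 + 1)%Z with (k - i)%Z by lia; lra).
      assert (z1 - z2 = 1)%Z.
      { assert (0 < IZR (z1 - z2) < 2) by (unfold d in Hz; replace (k - i - 1 + 1)%Z with (k - i)%Z in Hz by lia; lra).
        destruct H as [Ha Hb]. apply lt_IZR in Ha. apply lt_IZR in Hb. lia. }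
      rewrite Hz, H. reflexivity. }
    destruct (Z.Even_or_Odd k) as [[w Hw] | [w Hw]].
    + exfalso. destruct (Hc w) as [z Hz]. replace (k - w)%Z with w in Hz by lia.
      apply (no_int_01 (- z)). rewrite opp_IZR. lra.
    + assert (Hw2 : d w = 1 / 2).
      { pose proof (Hsum w) as H. replace (k - w - 1)%Z with w in H by lia. lra. }
      assert (Hall : forall i, d i = 1 / 2).
      { apply (Zall_from (fun i => d i = 1 / 2) w); auto.
        - intros i H. pose proof (Hdd i). lra.
        - intros i H. pose proof (Hdd i). lra. }
      intros i. pose proof (Hall i) as H. unfold d in H. rewrite H2r, H1r. lra.
Qed.

Lemma X_lin (X : Z -> R) (dl : R) : (forall i, X (i + 1)%Z = X i + dl) -> forall i, X i = X 0%Z + IZR i * dl.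
Proof. intros H i. pose proof (iterZ X 1 dl H i 0%Z) as E. rewrite Z.mul_1_r, Z.add_0_l in E. exact E. Qed.

Lemma center0 (m n : nat) (g : R -> pt) (X : Z -> R) :
  (0 < INR n) ->
  (forall s t, g s = g t -> exists k : Z, s - t = IZR k) ->
  (forall t, g (- t) = reflS (g t)) ->
  (forall i, X (i + 1)%Z = X i + INR m / INR n) ->
  dn_symmetric n g X ->
  exists z a : Z, 2 * X 0%Z = IZR z + IZR a / INR n.
Proof.
  intros Hn Hinj Hrf Hst Hsym.
  destruct (Hsym 0%nat true) as [k Hk].
  assert (Hact : forall z, dn_act n 0 true z = reflS z).
  { intros z. unfold dn_act. replace (2 * PI * INR 0 / INR n) with 0 by (simpl; field; lra). apply rot_0. }
  assert (H : g (X k) = g (- X 0%Z)).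
  { rewrite Hrf. destruct Hk as [Hk|Hk]; specialize (Hk 0%Z); rewrite Hact in Hk; rewrite Hk; f_equal; f_equal; lia. }
  apply Hinj in H. destruct H as [z Hz].
  rewrite (X_lin X _ Hst k) in Hz.
  exists z, (- (k * Z.of_nat m))%Z. rewrite !opp_IZR, mult_IZR, <- INR_IZR_INZ.
  replace (- (IZR k * INR m) / INR n) with (- (IZR k * (INR m / INR n))) by (field; lra). lra.
Qed.

Lemma centerX (m n : nat) (g : R -> pt) (X : Z -> R) :
  (0 < INR n) ->
  (forall s t, g s = g t -> exists k : Z, s - t = IZR k) ->
  (forall t, g (- t) = reflS (g t)) ->
  (forall i, X (i + 1)%Z = X i + INR m / INR n) ->
  dn_symmetric n g X ->
  forall i, exists z a : Z, 2 * X i = IZR z + IZR a / INR n.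
Proof.
  intros Hn Hinj Hrf Hst Hsym i.
  destruct (center0 m n g X Hn Hinj Hrf Hst Hsym) as [z [a H]].
  exists z, (a + 2 * i * Z.of_nat m)%Z.
  rewrite (X_lin X _ Hst i), plus_IZR, !mult_IZR, <- INR_IZR_INZ.
  replace (2 * (X 0%Z + IZR i * (INR m / INR n))) with (2 * X 0%Z + 2 * IZR i * INR m / INR n) by (field; lra).
  rewrite H. field. lra.
Qed.

Lemma greflect (n : nat) (g : R -> pt) : (0 < INR n) ->
  (forall t, g (t + 1) = g t) ->
  (forall t, g (t + 1 / INR n) = rot (2 * PI / INR n) (g t)) ->
  (forall t, g (- t) = reflS (g t)) ->
  forall (z a : Z) t, g (IZR z + IZR a / INR n - t) = rot (2 * PI * IZR a / INR n) (reflS (g t)).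
Proof.
  intros Hn Hp Hr Hrf z a t.
  replace (IZR z + IZR a / INR n - t) with ((- t + IZR a / INR n) + IZR z) by ring.
  rewrite (gper_Z g Hp), (gshift_Z g n Hn Hr), Hrf. auto.
Qed.

Lemma Lf_center (n : nat) (g : R -> pt) : (0 < INR n) ->
  (forall t, g (t + 1) = g t) ->
  (forall t, g (t + 1 / INR n) = rot (2 * PI / INR n) (g t)) ->
  (forall t, g (- t) = reflS (g t)) ->
  forall (z a : Z) x y, Lf g (IZR z + IZR a / INR n - x) (IZR z + IZR a / INR n - y) = Lf g x y.
Proof.
  intros Hn Hp Hr Hrf z a x y. unfold Lf, pnorm.
  rewrite !(greflect n g Hn Hp Hr Hrf), psub_rot, dot_rot, psub_refl, dot_refl. auto.
Qed.

Lemma dot_center (n : nat) (g : R -> pt) : (0 < INR n) ->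
  (forall t, g (t + 1) = g t) ->
  (forall t, g (t + 1 / INR n) = rot (2 * PI / INR n) (g t)) ->
  (forall t, g (- t) = reflS (g t)) ->
  forall (z a : Z) t, dot (g (IZR z + IZR a / INR n - t)) (g (IZR z + IZR a / INR n - t)) = dot (g t) (g t).
Proof.
  intros Hn Hp Hr Hrf z a t.
  rewrite !(greflect n g Hn Hp Hr Hrf), dot_rot, dot_refl. auto.
Qed.

Lemma d11_shift (F : R -> R -> R) s : (forall x y, F (x + s) (y + s) = F x y) ->
  forall x y, d11 F (x + s) (y + s) = d11 F x y.
Proof.
  intros H x y. unfold d11.
  rewrite (Derive_ext (fun t => Derive (fun u => F u (y + s)) t) (fun t => Derive (fun u => F u y) (t + - s))).
  - rewrite (Derive_shift (fun t => Derive (fun u => F u y) t)). f_equal. ring.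
  - intros t. rewrite <- Derive_shift. apply Derive_ext. intros u.
    rewrite <- (H (u + - s) y). f_equal. ring.
Qed.

Lemma d22_shift (F : R -> R -> R) s : (forall x y, F (x + s) (y + s) = F x y) ->
  forall x y, d22 F (x + s) (y + s) = d22 F x y.
Proof.
  intros H x y. unfold d22.
  rewrite (Derive_ext (fun t => Derive (fun u => F (x + s) u) t) (fun t => Derive (fun u => F x u) (t + - s))).
  - rewrite (Derive_shift (fun t => Derive (fun u => F x u) t)). f_equal. ring.
  - intros t. rewrite <- Derive_shift. apply Derive_ext. intros u.
    rewrite <- (H x (u + - s)). f_equal. ring.
Qed.

Lemma d12_shift (F : R -> R -> R) s : (forall x y, F (x + s) (y + s) = F x y) ->
  forall x y, d12 F (x + s) (y + s) = d12 F x y.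
Proof.
  intros H x y. unfold d12.
  rewrite (Derive_ext (fun t => Derive (fun u => F t u) (y + s)) (fun t => Derive (fun u => F (t + - s) u) y)).
  - rewrite (Derive_shift (fun t => Derive (fun u => F t u) y)). f_equal. ring.
  - intros t. 
    rewrite (Derive_ext (fun u => F t u) (fun u => F (t + - s) (u + - s))).
    + rewrite Derive_shift. f_equal. ring.
    + intros u. rewrite <- (H (t + - s) (u + - s)). f_equal; ring.
Qed.

Lemma loc_ball (a r : R) (P : R -> Prop) : 0 < r -> (forall t, Rabs (t - a) < r -> P t) -> locally a P.
Proof.
  intros Hr H. exists (mkposreal r Hr). intros t Ht. apply H. exact Ht.
Qed.

Lemma Dsq_pos (g : R -> pt) : (forall s t, g s = g t -> exists k : Z, s - t = IZR k) ->
  forall x y, 0 < Rabs (x - y) < 1 -> 0 < Dsq g x y.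
Proof.
  intros Hinj x y Hxy. unfold Dsq.
  pose proof (Rle_0_sqr (gx g x - gx g y)) as H1. pose proof (Rle_0_sqr (gy g x - gy g y)) as H2. unfold Rsqr in *.
  destruct (Rle_lt_or_eq_dec 0 _ (Rplus_le_le_0_compat _ _ H1 H2)) as [H|H]; auto.
  exfalso. assert (gx g x = gx g y) by nra. assert (gy g x = gy g y) by nra.
  assert (E : g x = g y) by (apply pt_eq; auto). apply Hinj in E. destruct E as [k Hk].
  rewrite Hk in Hxy. rewrite <- abs_IZR in Hxy. destruct Hxy as [Ha Hb].
  apply lt_IZR in Ha. apply lt_IZR in Hb. lia.
Qed.

Lemma d11_eq g a b r : smooth2 g -> 0 < r -> (forall t, Rabs (t - a) < r -> 0 < Dsq g t b) ->
  d11 (Lf g) a b = QL11 g a b.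
Proof.
  intros Hs Hr H. unfold d11.
  rewrite (Derive_ext_loc _ (fun t => PL1 g t b)).
  - apply is_derive_unique, dQ11; auto. apply H. rewrite Rminus_diag, Rabs_R0; auto.
  - apply (loc_ball a r); auto. intros t Ht. apply is_derive_unique, dL1; auto.
Qed.

Lemma d22_eq g a b r : smooth2 g -> 0 < r -> (forall t, Rabs (t - b) < r -> 0 < Dsq g a t) ->
  d22 (Lf g) a b = QL22 g a b.
Proof.
  intros Hs Hr H. unfold d22.
  rewrite (Derive_ext_loc _ (fun t => PL2 g a t)).
  - apply is_derive_unique, dQ22; auto. apply H. rewrite Rminus_diag, Rabs_R0; auto.
  - apply (loc_ball b r); auto. intros t Ht. apply is_derive_unique, dL2; auto.
Qed.

Lemma d12_eq g a b r : smooth2 g -> 0 < r -> (forall t, Rabs (t - a) < r -> 0 < Dsq g t b) ->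
  d12 (Lf g) a b = QL12 g a b.
Proof.
  intros Hs Hr H. unfold d12.
  rewrite (Derive_ext_loc _ (fun t => PL2 g t b)).
  - apply is_derive_unique, dQ21; auto. apply H. rewrite Rminus_diag, Rabs_R0; auto.
  - apply (loc_ball a r); auto. intros t Ht. apply is_derive_unique, dL2; auto.
Qed.

Lemma d22_refl g a0 b c b1 r : smooth2 g -> 0 < r ->
  (forall u, Lf g a0 u = Lf g (c - u) b1) ->
  (forall t, Rabs (t - b) < r -> 0 < Dsq g (c - t) b1) ->
  d22 (Lf g) a0 b = QL11 g (c - b) b1.
Proof.
  intros Hs Hr HL H. unfold d22.
  assert (Hd : forall t, 0 < Dsq g (c - t) b1 -> is_derive (fun u => Lf g (c - u) b1) t (- PL1 g (c - t) b1)).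
  { intros t Ht. 
    assert (E := is_derive_comp (fun v => Lf g v b1) (fun u => c - u) t _ (-1) (dL1 g (c - t) b1 Hs Ht)).
    assert (Hm : is_derive (fun u : R => c - u) t (-1)) by (auto_derive; auto; ring).
    specialize (E Hm). unfold scal in E; simpl in E; unfold mult in E; simpl in E.
    replace (- PL1 g (c - t) b1) with (-1 * PL1 g (c - t) b1) by ring. exact E. }
  rewrite (Derive_ext_loc _ (fun t => - PL1 g (c - t) b1)).
  - apply is_derive_unique.
    assert (H0 : 0 < Dsq g (c - b) b1) by (apply H; rewrite Rminus_diag, Rabs_R0; auto).
    assert (E := is_derive_comp (fun v => PL1 g v b1) (fun u => c - u) b _ (-1) (dQ11 g (c - b) b1 Hs H0)).
    assert (Hm : is_derive (fun u : R => c - u) b (-1)) by (auto_derive; auto; ring).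
    specialize (E Hm). unfold scal in E; simpl in E; unfold mult in E; simpl in E.
    apply is_derive_opp in E. replace (QL11 g (c - b) b1) with (opp (-1 * QL11 g (c - b) b1)).
    + exact E.
    + unfold opp; simpl; ring.
  - apply (loc_ball b r); auto. intros t Ht. rewrite (Derive_ext _ (fun u => Lf g (c - u) b1)) by auto.
    apply is_derive_unique, Hd; auto.
Qed.

Definition i1 (i : nat) : nat := (i + 1)%nat.
Definition i2 (p i : nat) : nat := if Nat.eqb (i + 1) p then 1%nat else (i + 2)%nat.
Definition cc (p : nat) (q : R) (i : nat) : R := if Nat.eqb (i + 1) p then q else 0.

Lemma sumR_ext (f h : nat -> R) k : (forall i, (i < k)%nat -> f i = h i) -> sumR f k = sumR h k.
Proof.
  induction k; simpl; intros H; auto.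
  f_equal; [apply IHk; intros; apply H; lia | apply H; lia].
Qed.

Lemma Wpq_alt g p q x : (1 <= p)%nat ->
  Wpq g p q x = sumR (fun i => Lf g (x (i1 i)) (x (i2 p i) + cc p q i)) p.
Proof.
  intros Hp. unfold Wpq. destruct p as [|p']; [lia|]. simpl sumR at 2.
  replace (S p' - 1)%nat with p' by lia. f_equal.
  - apply sumR_ext. intros i Hi. unfold i1, i2, cc.
    destruct (Nat.eqb (i + 1) (S p')) eqn:E; [apply Nat.eqb_eq in E; lia|]. rewrite Rplus_0_r. auto.
  - unfold i1, i2, cc. rewrite (proj2 (Nat.eqb_eq (p' + 1) (S p'))) by lia.
    replace (p' + 1)%nat with (S p') by lia. auto.
Qed.

Lemma sumR_derive (f : nat -> R -> R) (f' : nat -> R) x k :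
  (forall i, (i < k)%nat -> is_derive (f i) x (f' i)) ->
  is_derive (fun t => sumR (fun i => f i t) k) x (sumR f' k).
Proof.
  induction k; intros H; simpl.
  - (auto_derive; auto).
  - apply (is_derive_plus (fun t => sumR (fun i => f i t) k) (f k)).
    + apply IHk. intros; apply H; lia.
    + apply H; lia.
Qed.

Lemma comp_shift (f : R -> R) c y v : is_derive f (y + c) v -> is_derive (fun u => f (u + c)) y v.
Proof.
  intros H. assert (Hm : is_derive (fun u : R => u + c) y 1) by (auto_derive; auto; ring).
  pose proof (is_derive_comp f (fun u => u + c) y v 1 H Hm) as E.
  unfold scal in E; simpl in E; unfold mult in E; simpl in E. rewrite Rmult_1_l in E. exact E.
Qed.

Lemma i12_ne p i : (2 <= p)%nat -> (i < p)%nat -> i1 i <> i2 p i.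
Proof.
  intros Hp Hi. unfold i1, i2. destruct (Nat.eqb (i + 1) p) eqn:E.
  - apply Nat.eqb_eq in E. lia.
  - lia.
Qed.

Definition goodv g p q (x : nat -> R) := forall i, (i < p)%nat -> 0 < Dsq g (x (i1 i)) (x (i2 p i) + cc p q i).

Lemma upd_same x j : forall l, upd x j (x j) l = x l.
Proof. intros l. unfold upd. destruct (Nat.eqb l j) eqn:E; auto. apply Nat.eqb_eq in E. subst; auto. Qed.

Lemma partial_W g p q y k : smooth2 g -> (2 <= p)%nat -> goodv g p q y ->
  partial (Wpq g p q) k y =
  sumR (fun i => (if Nat.eqb (i1 i) k then PL1 g (y (i1 i)) (y (i2 p i) + cc p q i) else 0)
               + (if Nat.eqb (i2 p i) k then PL2 g (y (i1 i)) (y (i2 p i) + cc p q i) else 0)) p.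
Proof.
  intros Hs Hp Hg. unfold partial.
  rewrite (Derive_ext _ (fun t => sumR (fun i => Lf g (upd y k t (i1 i)) (upd y k t (i2 p i) + cc p q i)) p))
    by (intros; apply Wpq_alt; lia).
  apply is_derive_unique.
  apply (sumR_derive (fun i t => Lf g (upd y k t (i1 i)) (upd y k t (i2 p i) + cc p q i))).
  intros i Hi. unfold upd. pose proof (Hg i Hi) as Hgi.
  destruct (Nat.eqb (i1 i) k) eqn:E1; destruct (Nat.eqb (i2 p i) k) eqn:E2.
  - apply Nat.eqb_eq in E1. apply Nat.eqb_eq in E2. exfalso. apply (i12_ne p i); auto. lia.
  - apply Nat.eqb_eq in E1. subst k. rewrite Rplus_0_r. apply dL1; auto.
  - apply Nat.eqb_eq in E2. subst k. rewrite Rplus_0_l. apply (comp_shift (fun u => Lf g (y (i1 i)) u)).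
    apply dL2; auto.
  - rewrite Rplus_0_r. (auto_derive; auto).
Qed.

Lemma dPL1_upd g p q x j i : smooth2 g -> (2 <= p)%nat -> (i < p)%nat ->
  0 < Dsq g (x (i1 i)) (x (i2 p i) + cc p q i) ->
  is_derive (fun t => PL1 g (upd x j t (i1 i)) (upd x j t (i2 p i) + cc p q i)) (x j)
    ((if Nat.eqb (i1 i) j then QL11 g (x (i1 i)) (x (i2 p i) + cc p q i) else 0)
     + (if Nat.eqb (i2 p i) j then QL12 g (x (i1 i)) (x (i2 p i) + cc p q i) else 0)).
Proof.
  intros Hs Hp Hi Hd. unfold upd.
  destruct (Nat.eqb (i1 i) j) eqn:E1; destruct (Nat.eqb (i2 p i) j) eqn:E2.
  - apply Nat.eqb_eq in E1. apply Nat.eqb_eq in E2. exfalso. apply (i12_ne p i); auto. lia.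
  - apply Nat.eqb_eq in E1. subst j. rewrite Rplus_0_r. apply dQ11; auto.
  - apply Nat.eqb_eq in E2. subst j. rewrite Rplus_0_l. apply (comp_shift (fun u => PL1 g (x (i1 i)) u)).
    apply dQ12; auto.
  - rewrite Rplus_0_r. auto_derive; auto.
Qed.

Lemma dPL2_upd g p q x j i : smooth2 g -> (2 <= p)%nat -> (i < p)%nat ->
  0 < Dsq g (x (i1 i)) (x (i2 p i) + cc p q i) ->
  is_derive (fun t => PL2 g (upd x j t (i1 i)) (upd x j t (i2 p i) + cc p q i)) (x j)
    ((if Nat.eqb (i1 i) j then QL12 g (x (i1 i)) (x (i2 p i) + cc p q i) else 0)
     + (if Nat.eqb (i2 p i) j then QL22 g (x (i1 i)) (x (i2 p i) + cc p q i) else 0)).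
Proof.
  intros Hs Hp Hi Hd. unfold upd.
  destruct (Nat.eqb (i1 i) j) eqn:E1; destruct (Nat.eqb (i2 p i) j) eqn:E2.
  - apply Nat.eqb_eq in E1. apply Nat.eqb_eq in E2. exfalso. apply (i12_ne p i); auto. lia.
  - apply Nat.eqb_eq in E1. subst j. rewrite Rplus_0_r. apply dQ21; auto.
  - apply Nat.eqb_eq in E2. subst j. rewrite Rplus_0_l. apply (comp_shift (fun u => PL2 g (x (i1 i)) u)).
    apply dQ22; auto.
  - rewrite Rplus_0_r. auto_derive; auto.
Qed.

Definition hterm g p q (x : nat -> R) (j k i : nat) : R :=
  (if Nat.eqb (i1 i) k then
     (if Nat.eqb (i1 i) j then QL11 g (x (i1 i)) (x (i2 p i) + cc p q i) else 0)
     + (if Nat.eqb (i2 p i) j then QL12 g (x (i1 i)) (x (i2 p i) + cc p q i) else 0) else 0)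
  + (if Nat.eqb (i2 p i) k then
     (if Nat.eqb (i1 i) j then QL12 g (x (i1 i)) (x (i2 p i) + cc p q i) else 0)
     + (if Nat.eqb (i2 p i) j then QL22 g (x (i1 i)) (x (i2 p i) + cc p q i) else 0) else 0).

Lemma hess_W g p q x j k r : smooth2 g -> (2 <= p)%nat -> 0 < r ->
  (forall t, Rabs (t - x j) < r -> goodv g p q (upd x j t)) ->
  hess (Wpq g p q) x j k = sumR (hterm g p q x j k) p.
Proof.
  intros Hs Hp Hr Hg. unfold hess.
  rewrite (Derive_ext_loc _ (fun t => sumR (fun i =>
      (if Nat.eqb (i1 i) k then PL1 g (upd x j t (i1 i)) (upd x j t (i2 p i) + cc p q i) else 0)
    + (if Nat.eqb (i2 p i) k then PL2 g (upd x j t (i1 i)) (upd x j t (i2 p i) + cc p q i) else 0)) p)).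
  - apply is_derive_unique.
    apply (sumR_derive (fun i t =>
      (if Nat.eqb (i1 i) k then PL1 g (upd x j t (i1 i)) (upd x j t (i2 p i) + cc p q i) else 0)
    + (if Nat.eqb (i2 p i) k then PL2 g (upd x j t (i1 i)) (upd x j t (i2 p i) + cc p q i) else 0))).
    intros i Hi.
    assert (Hgx : goodv g p q x).
    { intros i' Hi'. pose proof (Hg (x j) ltac:(rewrite Rminus_diag, Rabs_R0; auto) i' Hi') as H.
      rewrite !upd_same in H. auto. }
    apply (is_derive_plus (fun t => if Nat.eqb (i1 i) k then PL1 g (upd x j t (i1 i)) (upd x j t (i2 p i) + cc p q i) else 0)
                          (fun t => if Nat.eqb (i2 p i) k then PL2 g (upd x j t (i1 i)) (upd x j t (i2 p i) + cc p q i) else 0)).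
    + destruct (Nat.eqb (i1 i) k). 
      * apply dPL1_upd; auto.
      * auto_derive; auto.
    + destruct (Nat.eqb (i2 p i) k).
      * apply dPL2_upd; auto.
      * auto_derive; auto.
  - apply (loc_ball (x j) r); auto. intros t Ht. apply partial_W; auto.
Qed.

Lemma modchar (j k p : Z) : (2 <= p)%Z -> (1 <= j <= p)%Z -> (1 <= k <= p)%Z -> (Z.modulo (j - k) p = 1)%Z <-> (j = k + 1 \/ (k = p /\ j = 1))%Z.
Proof.
intros. split; intros.
- pose proof (Z.div_mod (j - k) p ltac:(lia)) as E. rewrite H2 in E. set (q := ((j - k) / p)%Z) in *.
  assert (q <= 0)%Z. { destruct (Z.le_gt_cases q 0); auto. assert (p * q >= p)%Z by nia. lia. }
  assert (q >= -1)%Z. { destruct (Z.le_gt_cases q (-2)); [|lia]. assert (p * q <= -2 * p)%Z by nia. lia. }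
  assert (q = 0 \/ q = -1)%Z as [Hq|Hq] by lia; rewrite Hq in E; lia.
- destruct H2 as [H2|[H2 H3]].
  + subst. replace (k+1-k)%Z with 1%Z by lia. apply Z.mod_small; lia.
  + subst. replace (1 - p)%Z with (1 + (-1) * p)%Z by lia. rewrite Z.mod_add by lia. apply Z.mod_small; lia.
Qed.

Lemma sumR_plus (f h : nat -> R) k : sumR (fun i => f i + h i) k = sumR f k + sumR h k.
Proof. induction k; simpl; [ring|rewrite IHk; ring]. Qed.

Lemma sumR_zero (f : nat -> R) k : (forall i, (i < k)%nat -> f i = 0) -> sumR f k = 0.
Proof. induction k; simpl; intros H; auto. rewrite IHk, H; try lia; try ring. intros; apply H; lia. Qed.

Lemma sumR_single (f : nat -> R) k i0 : (i0 < k)%nat -> (forall i, (i < k)%nat -> i <> i0 -> f i = 0) -> sumR f k = f i0.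
Proof.
  induction k; simpl; intros Hi H; [lia|].
  destruct (Nat.eq_dec i0 k).
  - subst. rewrite sumR_zero; [ring|]. intros; apply H; lia.
  - rewrite IHk; try lia. rewrite (H k); try lia. ring. intros; apply H; lia.
Qed.

Lemma i2_char p i k : (2 <= p)%nat -> (i < p)%nat -> (1 <= k <= p)%nat ->
  (i2 p i = k <-> i = (if Nat.eqb k 1 then p - 1 else k - 2)%nat).
Proof.
  intros Hp Hi Hk. unfold i2. destruct (Nat.eqb (i + 1) p) eqn:E; destruct (Nat.eqb k 1) eqn:E2;
  [apply Nat.eqb_eq in E; apply Nat.eqb_eq in E2 | apply Nat.eqb_eq in E; apply Nat.eqb_neq in E2
  |apply Nat.eqb_neq in E; apply Nat.eqb_eq in E2 | apply Nat.eqb_neq in E; apply Nat.eqb_neq in E2]; split; intros; lia.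
Qed.

Lemma hsum_circ g p q x j k a b : (2 <= p)%nat -> (1 <= j <= p)%nat -> (1 <= k <= p)%nat ->
  (forall i, (i < p)%nat -> QL11 g (x (i1 i)) (x (i2 p i) + cc p q i) = a /\
     QL22 g (x (i1 i)) (x (i2 p i) + cc p q i) = a /\ QL12 g (x (i1 i)) (x (i2 p i) + cc p q i) = b) ->
  sumR (hterm g p q x j k) p = circ p a b j k.
Proof.
  intros Hp Hj Hk HQ.
  rewrite (sumR_ext _ (fun i =>
     ((if Nat.eqb (i1 i) k then (if Nat.eqb (i1 i) j then a else 0) else 0)
     + (if Nat.eqb (i1 i) k then (if Nat.eqb (i2 p i) j then b else 0) else 0))
     + ((if Nat.eqb (i2 p i) k then (if Nat.eqb (i1 i) j then b else 0) else 0)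
     + (if Nat.eqb (i2 p i) k then (if Nat.eqb (i2 p i) j then a else 0) else 0)))).
  2:{ intros i Hi. destruct (HQ i Hi) as (H1 & H2 & H3). unfold hterm. rewrite H1, H2, H3.
      destruct (Nat.eqb (i1 i) k), (Nat.eqb (i2 p i) k), (Nat.eqb (i1 i) j), (Nat.eqb (i2 p i) j); ring. }
  rewrite !sumR_plus.
  rewrite (sumR_single _ p (k - 1)); [| lia |].
  2:{ intros i Hi Hne. unfold i1. destruct (Nat.eqb (i + 1) k) eqn:E; auto. apply Nat.eqb_eq in E; lia. }
  rewrite (sumR_single (fun i => if Nat.eqb (i1 i) k then (if Nat.eqb (i2 p i) j then b else 0) else 0) p (k - 1)); [| lia |].
  2:{ intros i Hi Hne. unfold i1. destruct (Nat.eqb (i + 1) k) eqn:E; auto. apply Nat.eqb_eq in E; lia. }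
  rewrite (sumR_single (fun i => if Nat.eqb (i2 p i) k then (if Nat.eqb (i1 i) j then b else 0) else 0) p (j - 1)); [| lia |].
  2:{ intros i Hi Hne. unfold i1. destruct (Nat.eqb (i + 1) j) eqn:E; [apply Nat.eqb_eq in E; lia|].
      destruct (Nat.eqb (i2 p i) k); auto. }
  set (i0 := (if Nat.eqb k 1 then p - 1 else k - 2)%nat).
  assert (Hi0 : (i0 < p)%nat) by (unfold i0; destruct (Nat.eqb k 1); lia).
  rewrite (sumR_single (fun i => if Nat.eqb (i2 p i) k then (if Nat.eqb (i2 p i) j then a else 0) else 0) p i0); auto.
  2:{ intros i Hi Hne. destruct (Nat.eqb (i2 p i) k) eqn:E; auto. apply Nat.eqb_eq in E.
      apply (i2_char p i k) in E; auto. contradiction. }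
  assert (E0 : i2 p i0 = k) by (apply i2_char; auto; lia).
  unfold i1. replace (k - 1 + 1)%nat with k by lia. replace (j - 1 + 1)%nat with j by lia.
  rewrite E0, Nat.eqb_refl. rewrite !Nat.eqb_refl.
  unfold circ.
  assert (A1 : Nat.eqb (i2 p (k - 1)) j = Z.eqb ((Z.of_nat j - Z.of_nat k) mod Z.of_nat p) 1).
  { destruct (Nat.eqb (i2 p (k - 1)) j) eqn:E; destruct (Z.eqb ((Z.of_nat j - Z.of_nat k) mod Z.of_nat p) 1) eqn:F; auto.
    - apply Nat.eqb_eq in E. apply Z.eqb_neq in F. exfalso. apply F. apply modchar; try lia.
      unfold i2 in E. destruct (Nat.eqb (k - 1 + 1) p) eqn:G; [apply Nat.eqb_eq in G|apply Nat.eqb_neq in G]; lia.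
    - apply Nat.eqb_neq in E. apply Z.eqb_eq in F. exfalso. apply E. apply modchar in F; try lia.
      unfold i2. destruct (Nat.eqb (k - 1 + 1) p) eqn:G; [apply Nat.eqb_eq in G|apply Nat.eqb_neq in G]; lia. }
  assert (A2 : Nat.eqb (i2 p (j - 1)) k = Z.eqb ((Z.of_nat k - Z.of_nat j) mod Z.of_nat p) 1).
  { destruct (Nat.eqb (i2 p (j - 1)) k) eqn:E; destruct (Z.eqb ((Z.of_nat k - Z.of_nat j) mod Z.of_nat p) 1) eqn:F; auto.
    - apply Nat.eqb_eq in E. apply Z.eqb_neq in F. exfalso. apply F. apply modchar; try lia.
      unfold i2 in E. destruct (Nat.eqb (j - 1 + 1) p) eqn:G; [apply Nat.eqb_eq in G|apply Nat.eqb_neq in G]; lia.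
    - apply Nat.eqb_neq in E. apply Z.eqb_eq in F. exfalso. apply E. apply modchar in F; try lia.
      unfold i2. destruct (Nat.eqb (j - 1 + 1) p) eqn:G; [apply Nat.eqb_eq in G|apply Nat.eqb_neq in G]; lia. }
  rewrite A1, A2. rewrite (Nat.eqb_sym k j).
  destruct (Nat.eqb j k); destruct (Z.eqb ((Z.of_nat j - Z.of_nat k) mod Z.of_nat p) 1);
  destruct (Z.eqb ((Z.of_nat k - Z.of_nat j) mod Z.of_nat p) 1); ring.
Qed.

Lemma sinZ (N : Z) x : sin (x + 2 * IZR N * PI) = sin x.
Proof.
  destruct (Z_le_gt_dec 0 N).
  - rewrite <- (Z2Nat.id N) by auto. rewrite <- INR_IZR_INZ. apply sin_period.
  - pose proof (sin_period (x + 2 * IZR N * PI) (Z.to_nat (- N))) as H.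
    rewrite INR_IZR_INZ, Z2Nat.id, opp_IZR in H by lia. rewrite <- H. f_equal. ring.
Qed.

Lemma cosZ (N : Z) x : cos (x + 2 * IZR N * PI) = cos x.
Proof.
  destruct (Z_le_gt_dec 0 N).
  - rewrite <- (Z2Nat.id N) by auto. rewrite <- INR_IZR_INZ. apply cos_period.
  - pose proof (cos_period (x + 2 * IZR N * PI) (Z.to_nat (- N))) as H.
    rewrite INR_IZR_INZ, Z2Nat.id, opp_IZR in H by lia. rewrite <- H. f_equal. ring.
Qed.

Lemma circ_eigen (p : nat) (a b th : R) (h : R -> R) (j : nat) :
  (2 <= p)%nat -> (1 <= j <= p)%nat ->
  (forall x, h (x - th) + h (x + th) = 2 * cos th * h x) ->
  (forall x, h (x + th * INR p) = h x) ->
  sumR (fun k => circ p a b j (S k) * h (th * INR (S k))) p = (2 * a + 2 * b * cos th) * h (th * INR j).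
Proof.
  intros Hp Hj H1 H2.
  assert (Hp' : (2 <= Z.of_nat p)%Z) by lia.
  unfold circ.
  rewrite (sumR_ext _ (fun k => (if Nat.eqb j (S k) then 2 * a * h (th * INR (S k)) else 0)
     + ((if Z.eqb ((Z.of_nat j - Z.of_nat (S k)) mod Z.of_nat p) 1 then b * h (th * INR (S k)) else 0)
     + (if Z.eqb ((Z.of_nat (S k) - Z.of_nat j) mod Z.of_nat p) 1 then b * h (th * INR (S k)) else 0))))
    by (intros k Hk; destruct (Nat.eqb j (S k)), (Z.eqb ((Z.of_nat j - Z.of_nat (S k)) mod Z.of_nat p) 1),
         (Z.eqb ((Z.of_nat (S k) - Z.of_nat j) mod Z.of_nat p) 1); ring).
  rewrite !sumR_plus.
  rewrite (sumR_single _ p (j - 1)); [|lia|].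
  2:{ intros k Hk Hne. destruct (Nat.eqb j (S k)) eqn:E; auto. apply Nat.eqb_eq in E; lia. }
  replace (S (j - 1)) with j by lia. rewrite Nat.eqb_refl.
  set (pv := (if Nat.eqb j 1 then p - 1 else j - 2)%nat).
  set (nx := (if Nat.eqb j p then 0 else j)%nat).
  assert (Hpv : (pv < p)%nat) by (unfold pv; destruct (Nat.eqb j 1) eqn:E; [|apply Nat.eqb_neq in E]; lia).
  assert (Hnx : (nx < p)%nat) by (unfold nx; destruct (Nat.eqb j p) eqn:E; [|apply Nat.eqb_neq in E]; lia).
  rewrite (sumR_single _ p pv); auto.
  2:{ intros k Hk Hne. destruct (Z.eqb ((Z.of_nat j - Z.of_nat (S k)) mod Z.of_nat p) 1) eqn:E; auto.
      apply Z.eqb_eq, modchar in E; try lia. unfold pv in Hne. destruct (Nat.eqb j 1) eqn:F;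
      [apply Nat.eqb_eq in F | apply Nat.eqb_neq in F]; lia. }
  rewrite (sumR_single _ p nx); auto.
  2:{ intros k Hk Hne. destruct (Z.eqb ((Z.of_nat (S k) - Z.of_nat j) mod Z.of_nat p) 1) eqn:E; auto.
      apply Z.eqb_eq, modchar in E; try lia. unfold nx in Hne. destruct (Nat.eqb j p) eqn:F;
      [apply Nat.eqb_eq in F | apply Nat.eqb_neq in F]; lia. }
  assert (E1 : Z.eqb ((Z.of_nat j - Z.of_nat (S pv)) mod Z.of_nat p) 1 = true).
  { apply Z.eqb_eq, modchar; try lia; unfold pv; destruct (Nat.eqb j 1) eqn:F;
      [apply Nat.eqb_eq in F | apply Nat.eqb_neq in F]; lia. }
  assert (E2 : Z.eqb ((Z.of_nat (S nx) - Z.of_nat j) mod Z.of_nat p) 1 = true).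
  { apply Z.eqb_eq, modchar; try lia; unfold nx; destruct (Nat.eqb j p) eqn:F;
      [apply Nat.eqb_eq in F | apply Nat.eqb_neq in F]; lia. }
  rewrite E1, E2.
  assert (Hv1 : h (th * INR (S pv)) = h (th * INR j - th)).
  { unfold pv. destruct (Nat.eqb j 1) eqn:F; [apply Nat.eqb_eq in F | apply Nat.eqb_neq in F].
    - subst j. replace (S (p - 1)) with p by lia. rewrite <- (H2 (th * INR 1 - th)). f_equal. simpl. ring.
    - replace (S (j - 2)) with (j - 1)%nat by lia. rewrite minus_INR by lia. f_equal. simpl. ring. }
  assert (Hv2 : h (th * INR (S nx)) = h (th * INR j + th)).
  { unfold nx. destruct (Nat.eqb j p) eqn:F; [apply Nat.eqb_eq in F | apply Nat.eqb_neq in F].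
    - subst j. rewrite <- (H2 (th * INR 1)). f_equal. rewrite S_INR. simpl. ring.
    - rewrite S_INR. f_equal. ring. }
  rewrite Hv1, Hv2.
  transitivity (2 * a * h (th * INR j) + b * (h (th * INR j - th) + h (th * INR j + th))); [ring|].
  rewrite H1. ring.
Qed.

Lemma geo_core (z v : pt) (ph s c : R) :
  cos ph = 1 - 2 * s ^ 2 -> 0 < s -> dot z v = 0 -> pnorm v = c ->
  cross v (psub (rot ph z) z) > 0 ->
  cross v (psub (rot ph z) z) = c * pnorm (psub (rot ph z) z) * s /\
  cross v (psub z (rot (- ph) z)) = - c * pnorm (psub z (rot (- ph) z)) * s.
Proof.
  destruct z as [z1 z2], v as [v1 v2]. unfold cross, psub, rot, dot, pnorm; simpl.
  intros Hc Hs Hd Hv Hx. rewrite cos_neg, sin_neg.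
  pose proof (sin2_cos2 ph) as Hsc. unfold Rsqr in Hsc.
  set (C := cos ph) in *. set (S := sin ph) in *.
  set (K := v1 * z2 - v2 * z1).
  assert (E1 : v1 * (S * z1 + C * z2 - z2) - v2 * (C * z1 - S * z2 - z1) = (C - 1) * K).
  { unfold K. transitivity (S * (z1 * v1 + z2 * v2) + (C - 1) * (v1 * z2 - v2 * z1)); [ring|]. rewrite Hd. ring. }
  assert (E2 : v1 * (z2 - (- S * z1 + C * z2)) - v2 * (z1 - (C * z1 - - S * z2)) = - ((C - 1) * K)).
  { unfold K. transitivity (- (- S * (z1 * v1 + z2 * v2) + (C - 1) * (v1 * z2 - v2 * z1))); [ring|]. rewrite Hd. ring. }
  rewrite E1 in *. rewrite E2.
  assert (HK : K < 0) by (rewrite Hc in Hx; nra).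
  assert (HK2 : K * K = (v1 * v1 + v2 * v2) * (z1 * z1 + z2 * z2)).
  { unfold K. transitivity ((v1 * v1 + v2 * v2) * (z1 * z1 + z2 * z2) - (z1 * v1 + z2 * v2) ^ 2); [ring|]. rewrite Hd. ring. }
  assert (Q1 : (C * z1 - S * z2 - z1) * (C * z1 - S * z2 - z1) + (S * z1 + C * z2 - z2) * (S * z1 + C * z2 - z2)
               = 4 * s ^ 2 * (z1 * z1 + z2 * z2)).
  { transitivity ((S * S + C * C) * (z1 * z1 + z2 * z2) - 2 * C * (z1 * z1 + z2 * z2) + (z1 * z1 + z2 * z2)); [ring|].
    rewrite Hsc, Hc. ring. }
  assert (Q2 : (z1 - (C * z1 - - S * z2)) * (z1 - (C * z1 - - S * z2)) + (z2 - (- S * z1 + C * z2)) * (z2 - (- S * z1 + C * z2))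
               = 4 * s ^ 2 * (z1 * z1 + z2 * z2)).
  { transitivity ((S * S + C * C) * (z1 * z1 + z2 * z2) - 2 * C * (z1 * z1 + z2 * z2) + (z1 * z1 + z2 * z2)); [ring|].
    rewrite Hsc, Hc. ring. }
  unfold dot in *; cbn [fst snd] in *. rewrite Q1, Q2.
  assert (HL : sqrt (4 * s ^ 2 * (z1 * z1 + z2 * z2)) * c = - 2 * s * K).
  { rewrite <- Hv. rewrite <- sqrt_mult_alt by nra.
    replace (4 * s ^ 2 * (z1 * z1 + z2 * z2) * (v1 * v1 + v2 * v2)) with ((- 2 * s * K) ^ 2) by (replace ((- 2 * s * K) ^ 2) with (4 * s ^ 2 * (K * K)) by ring; rewrite HK2; ring).
    apply sqrt_pow2. nra. }
  rewrite Hc. split; nra.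
Qed.

Lemma perp g x0 C : smooth2 g ->
  (forall t, dot (g (C - t)) (g (C - t)) = dot (g t) (g t)) -> 2 * x0 = C ->
  dot (g x0) (dvel g x0) = 0.
Proof.
  intros Hs Hf HC.
  pose proof (Hs x0) as (H1 & _ & H3 & _).
  assert (D1 : is_derive (fun t => gx g t * gx g t + gy g t * gy g t) x0
     (2 * (gx g x0 * Derive (gx g) x0 + gy g x0 * Derive (gy g) x0))).
  { auto_derive; auto. cleanad g. ring. }
  assert (Hx : C - x0 = x0) by lra.
  pose proof (Hs (C - x0)) as (H1' & _ & H3' & _).
  assert (D2 : is_derive (fun t => gx g (C - t) * gx g (C - t) + gy g (C - t) * gy g (C - t)) x0
     (- (2 * (gx g (C - x0) * Derive (gx g) (C - x0) + gy g (C - x0) * Derive (gy g) (C - x0))))).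
  { auto_derive; auto. cleanad g. ring. }
  rewrite Hx in D2.
  assert (D3 : is_derive (fun t => gx g t * gx g t + gy g t * gy g t) x0
     (- (2 * (gx g x0 * Derive (gx g) x0 + gy g x0 * Derive (gy g) x0)))).
  { apply (is_derive_ext (fun t => gx g (C - t) * gx g (C - t) + gy g (C - t) * gy g (C - t)));
    [intros t; pose proof (Hf t) as E; unfold dot, gx, gy in *; exact E | exact D2]. }
  pose proof (is_derive_unique _ _ _ D1) as U1. pose proof (is_derive_unique _ _ _ D3) as U3.
  rewrite U1 in U3. unfold dot, dvel; simpl. unfold gx, gy in U3 |- *. lra.
Qed.

Lemma speed_perp g c : smooth2 g -> (forall t, pnorm (dvel g t) = c) ->
  forall t, Derive (gx g) t * Derive (Derive (gx g)) t + Derive (gy g) t * Derive (Derive (gy g)) t = 0.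
Proof.
  intros Hs Hc t.
  assert (Hq : forall u, Derive (gx g) u * Derive (gx g) u + Derive (gy g) u * Derive (gy g) u = c * c).
  { intros u. rewrite <- (Hc u). unfold pnorm, dot, dvel; simpl. rewrite sqrt_sqrt; auto. nra. }
  pose proof (Hs t) as (_ & H2 & _ & H4).
  assert (D1 : is_derive (fun u => Derive (gx g) u * Derive (gx g) u + Derive (gy g) u * Derive (gy g) u) t
     (2 * (Derive (gx g) t * Derive (Derive (gx g)) t + Derive (gy g) t * Derive (Derive (gy g)) t))).
  { auto_derive; auto. cleanad g. ring. }
  assert (D2 : is_derive (fun u => Derive (gx g) u * Derive (gx g) u + Derive (gy g) u * Derive (gy g) u) t 0).
  { apply (is_derive_ext (fun _ => c * c)); [intros; rewrite Hq; auto|]. auto_derive; auto. }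
  pose proof (is_derive_unique _ _ _ D1) as U1. pose proof (is_derive_unique _ _ _ D2) as U2. lra.
Qed.

Lemma pnorm_sq (v : pt) c : pnorm v = c -> fst v * fst v + snd v * snd v = c * c.
Proof. intros H. rewrite <- H. unfold pnorm, dot. rewrite sqrt_sqrt; auto. nra. Qed.

Lemma alpha_alg g x y c s : 0 < c -> 0 < s -> pnorm (dvel g y) = c ->
  Derive (gx g) y * Derive (Derive (gx g)) y + Derive (gy g) y * Derive (Derive (gy g)) y = 0 ->
  0 < Lf g x y ->
  cross (dvel g y) (psub (g y) (g x)) = - c * Lf g x y * s ->
  QL22 g x y = c ^ 2 * s * (s / Lf g x y - kappa g y).
Proof.
  intros Hc Hs Hv Hva HL HCW.
  pose proof (pnorm_sq _ _ Hv) as Hv2. pose proof (Lf_sq g x y) as HL2.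
  unfold QL22, NL2, kappa. rewrite Hv.
  unfold cross, dvel, psub in HCW. simpl in HCW, Hv2. unfold Dsq in HL2.
  set (L := Lf g x y) in *.
  set (v1 := Derive (gx g) y) in *. set (v2 := Derive (gy g) y) in *.
  set (a1 := Derive (Derive (gx g)) y) in *. set (a2 := Derive (Derive (gy g)) y) in *.
  change (fst (g y)) with (gx g y) in *. change (fst (g x)) with (gx g x) in *.
  change (snd (g y)) with (gy g y) in *. change (snd (g x)) with (gy g x) in *.
  set (w1 := gx g y - gx g x) in *. set (w2 := gy g y - gy g x) in *.
  set (CW := v1 * w2 - v2 * w1) in *. set (CA := v1 * a2 - v2 * a1).
  assert (HL2' : L * L = w1 * w1 + w2 * w2) by (rewrite HL2; unfold w1, w2; ring).
  assert (H1 : c * c * (w1 * a1 + w2 * a2) = CW * CA).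
  { rewrite <- Hv2. unfold CW, CA.
    transitivity ((v1 * w1 + v2 * w2) * (v1 * a1 + v2 * a2) + (v1 * w2 - v2 * w1) * (v1 * a2 - v2 * a1)); [ring|].
    rewrite Hva. ring. }
  assert (H2 : (w1 * v1 + w2 * v2) ^ 2 = c * c * (L * L) - CW * CW).
  { rewrite <- Hv2, HL2'. unfold CW. ring. }
  assert (E1 : w1 * a1 + w2 * a2 = CW * CA / (c * c)) by (rewrite <- H1; field; lra).
  replace (v1 ^ 2 + v2 ^ 2 + w1 * a1 + w2 * a2) with (c * c + CW * CA / (c * c)) by (rewrite <- E1, <- Hv2; ring).
  rewrite H2, HCW. field. lra.
Qed.

Lemma beta_alg g x y c s : 0 < c -> pnorm (dvel g x) = c -> pnorm (dvel g y) = c -> 0 < Lf g x y ->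
  cross (dvel g x) (psub (g y) (g x)) = c * Lf g x y * s ->
  cross (dvel g y) (psub (g y) (g x)) = - c * Lf g x y * s ->
  QL12 g x y = c ^ 2 * s ^ 2 / Lf g x y.
Proof.
  intros Hc Hvx Hvy HL H1 H2.
  pose proof (Lf_sq g x y) as HL2.
  unfold QL12, NL1, NL2. unfold cross, dvel, psub in H1, H2. simpl in H1, H2. unfold Dsq in HL2.
  set (L := Lf g x y) in *.
  change (fst (g y)) with (gx g y) in *. change (fst (g x)) with (gx g x) in *.
  change (snd (g y)) with (gy g y) in *. change (snd (g x)) with (gy g x) in *.
  set (p1 := Derive (gx g) x) in *. set (p2 := Derive (gy g) x) in *.
  set (q1 := Derive (gx g) y) in *. set (q2 := Derive (gy g) y) in *.
  set (u1 := gx g x - gx g y) in *. set (u2 := gy g x - gy g y) in *.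
  assert (E : (- (p1 * q1) - p2 * q2) / L - (u1 * p1 + u2 * p2) * ((gx g y - gx g x) * q1 + (gy g y - gy g x) * q2) / L ^ 3
     = - ((p1 * (gy g y - gy g x) - p2 * (gx g y - gx g x)) * (q1 * (gy g y - gy g x) - q2 * (gx g y - gx g x))) / L ^ 3).
  { assert (E0 : (- (p1 * q1) - p2 * q2) / L = (- (p1 * q1) - p2 * q2) * (u1 * u1 + u2 * u2) / L ^ 3)
      by (rewrite <- HL2; field; lra).
    rewrite E0. unfold Rdiv. rewrite <- Rmult_minus_distr_r. f_equal. unfold u1, u2. ring. }
  rewrite E, H1, H2. field. lra.
Qed.

Theorem mainTheorem17 (m n s : nat) (g : R -> pt) (X : Z -> R) :
  Nat.gcd m n = 1%nat -> (1 <= m)%nat -> (m <= n - 1)%nat -> (1 <= s)%nat ->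
  dn_billiard_curve n g ->
  billiard_orbit g X ->
  in_Xpq (Z.of_nat n) (INR m) X ->
  birkhoff X ->
  dn_symmetric n g X ->
  let p := (s * n)%nat in
  let q := INR (s * m) in
  exists alpha beta : R,
    (forall i : Z,
        d22 (Lf g) (X (i - 1)%Z) (X i) = alpha /\
        d11 (Lf g) (X i) (X (i + 1)%Z) = alpha /\
        d12 (Lf g) (X i) (X (i + 1)%Z) = beta) /\
    (forall j k : nat, (1 <= j <= p)%nat -> (1 <= k <= p)%nat ->
        hess (Wpq g p q) (vecX X) j k = circ p alpha beta j k) /\
    (forall (N : Z) (j : nat), (1 <= j <= p)%nat ->
        sumR (fun k => hess (Wpq g p q) (vecX X) j (S k)
                       * sin (2 * PI * IZR N * INR (S k) / INR p)) p
        = (2 * alpha + 2 * beta * cos (2 * PI * IZR N / INR p))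
          * sin (2 * PI * IZR N * INR j / INR p) /\
        sumR (fun k => hess (Wpq g p q) (vecX X) j (S k)
                       * cos (2 * PI * IZR N * INR (S k) / INR p)) p
        = (2 * alpha + 2 * beta * cos (2 * PI * IZR N / INR p))
          * cos (2 * PI * IZR N * INR j / INR p)) /\
    (forall c : R, (forall t, pnorm (dvel g t) = c) ->
        forall i : Z,
          alpha = c ^ 2 * sin (INR m * PI / INR n)
                  * (sin (INR m * PI / INR n) / pnorm (psub (g (X (i + 1)%Z)) (g (X i)))
                     - kappa g (X i)) /\
          beta = c ^ 2 * (sin (INR m * PI / INR n)) ^ 2
                 / pnorm (psub (g (X (i + 1)%Z)) (g (X i)))).
Proof.
  intros Hgcd Hm1 Hm2 Hs1 Hcurve Horb HXpq Hbirk Hsym p q.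
  destruct Hcurve as (Cx & Cy & Hper & Hinj & Himm & Hconv & Hrot & Hrefl).
  assert (Hs : smooth2 g).
  { intros t. destruct (Cx t) as (A1 & A2 & _). destruct (Cy t) as (B1 & B2 & _). auto. }
  assert (Hn2 : (2 <= n)%nat) by lia.
  assert (Hnr : 0 < INR n) by (apply lt_0_INR; lia).
  destruct Horb as [Hd Hlaw].
  pose proof (orbit_step m n g X Hn2 Hm1 Hm2 Hinj Hrot Hd HXpq Hsym) as Hstep.
  set (dl := INR m / INR n) in *.
  assert (Hdl : 0 < dl < 1).
  { unfold dl. assert (1 <= INR m) by (replace 1 with (INR 1) by auto; apply le_INR; lia).
    assert (INR m + 1 <= INR n) by (rewrite <- S_INR; apply le_INR; lia).
    split; [apply Rdiv_lt_0_compat; lra|]. apply (Rmult_lt_reg_r (INR n)); auto.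
    unfold Rdiv. rewrite Rmult_assoc, Rinv_l; lra. }
  pose proof (X_lin X dl Hstep) as Hlin.
  set (r := Rmin dl (1 - dl)).
  assert (Hr : 0 < r) by (unfold r; apply Rmin_glb_lt; lra).
  assert (Hr1 : r <= dl) by apply Rmin_l. assert (Hr2 : r <= 1 - dl) by apply Rmin_r.
  assert (Hsep : forall x y, Rabs (y - x - dl) < r -> 0 < Dsq g x y).
  { intros x y H. apply Dsq_pos; auto. apply Rabs_def2 in H. destruct H.
    rewrite Rabs_left1 by lra. lra. }
  assert (HXs : forall i, X (i + 1)%Z - X i = dl) by (intros; rewrite Hstep; ring).
  assert (Hshift : forall i : Z, X i = X 0%Z + IZR (i * Z.of_nat m) / INR n).
  { intros i. rewrite Hlin, mult_IZR, <- INR_IZR_INZ. unfold dl. field. lra. }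
  assert (Hshift1 : forall i : Z, X (i + 1)%Z = X 1%Z + IZR (i * Z.of_nat m) / INR n).
  { intros i. rewrite (Hlin (i + 1)%Z), (Hlin 1%Z), plus_IZR, mult_IZR, <- INR_IZR_INZ. unfold dl. field. lra. }
  set (alpha := d11 (Lf g) (X 0%Z) (X 1%Z)).
  set (beta := d12 (Lf g) (X 0%Z) (X 1%Z)).
  assert (Ha : forall i, d11 (Lf g) (X i) (X (i + 1)%Z) = alpha).
  { intros i. rewrite Hshift, Hshift1. apply d11_shift. intros; apply Lf_shift; auto. }
  assert (Hb : forall i, d12 (Lf g) (X i) (X (i + 1)%Z) = beta).
  { intros i. rewrite Hshift, Hshift1. apply d12_shift. intros; apply Lf_shift; auto. }
  assert (HQ11 : forall i, QL11 g (X i) (X (i + 1)%Z) = alpha).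
  { intros i. rewrite <- (Ha i). symmetry. apply (d11_eq g _ _ r); auto.
    intros t Ht. apply Hsep. rewrite <- (HXs i) in *. replace (X (i + 1)%Z - t - (X (i + 1)%Z - X i)) with (- (t - X i)) by ring.
    rewrite Rabs_Ropp. auto. }
  assert (HQ12 : forall i, QL12 g (X i) (X (i + 1)%Z) = beta).
  { intros i. rewrite <- (Hb i). symmetry. apply (d12_eq g _ _ r); auto.
    intros t Ht. apply Hsep. rewrite <- (HXs i) in *. replace (X (i + 1)%Z - t - (X (i + 1)%Z - X i)) with (- (t - X i)) by ring.
    rewrite Rabs_Ropp. auto. }
  assert (Hd22 : forall i, d22 (Lf g) (X (i - 1)%Z) (X i) = alpha).
  { intros i. rewrite <- (HQ11 i).
    destruct (centerX m n g X Hnr Hinj Hrefl Hstep Hsym i) as [z [a Hza]].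
    set (C := IZR z + IZR a / INR n) in *.
    assert (Hm1' : X (i - 1)%Z = X i - dl) by (pose proof (HXs (i - 1)%Z) as H; replace (i - 1 + 1)%Z with i in H by lia; lra).
    assert (Hp1 : X (i + 1)%Z = X i + dl) by (rewrite Hstep; auto).
    replace (X i) with (C - X i) at 2 by lra.
    apply (d22_refl g _ _ C _ r); auto.
    - intros u. rewrite Lf_sym. unfold C. rewrite <- (Lf_center n g Hnr Hper Hrot Hrefl z a u (X (i - 1)%Z)).
      fold C. f_equal. lra.
    - intros t Ht. apply Hsep. replace (X (i + 1)%Z - (C - t) - dl) with (t - X i) by lra. auto. }
  assert (HQ22 : forall i, QL22 g (X i) (X (i + 1)%Z) = alpha).
  { intros i. rewrite <- (Hd22 (i + 1)%Z). replace (i + 1 - 1)%Z with i by lia. symmetry.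
    apply (d22_eq g _ _ r); auto. intros t Ht. apply Hsep. rewrite <- (HXs i).
    replace (t - X i - (X (i + 1)%Z - X i)) with (t - X (i + 1)%Z) by ring. auto. }
  assert (Hp2 : (2 <= p)%nat) by (unfold p; nia).
  assert (Hpr : INR p = INR s * INR n) by (unfold p; rewrite mult_INR; ring).
  assert (Hpair : forall i, (i < p)%nat -> vecX X (i1 i) = X (Z.of_nat i + 1)%Z /\ vecX X (i2 p i) + cc p q i = X (Z.of_nat i + 2)%Z).
  { intros i Hi. unfold vecX, i1, i2, cc. split.
    - f_equal. lia.
    - destruct (Nat.eqb (i + 1) p) eqn:E.
      + apply Nat.eqb_eq in E. unfold q. rewrite (Hlin (Z.of_nat 1)), (Hlin (Z.of_nat i + 2)%Z).
        rewrite mult_INR. unfold dl. rewrite plus_IZR, <- INR_IZR_INZ.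
        assert (INR i + 1 = INR p) by (rewrite <- E, plus_INR; simpl; ring).
        replace (INR i) with (INR s * INR n - 1) by (rewrite Hpr in H; lra). rewrite <- INR_IZR_INZ. replace (INR i) with (INR s * INR n - 1) by (rewrite Hpr in H; lra). simpl. field. lra.
      + rewrite Rplus_0_r. f_equal. lia. }
  assert (Hgood : forall j t, (1 <= j <= p)%nat -> Rabs (t - vecX X j) < r -> goodv g p q (upd (vecX X) j t)).
  { intros j t Hj Ht i Hi. destruct (Hpair i Hi) as [P1 P2].
    assert (Hne := i12_ne p i Hp2 Hi).
    unfold upd. destruct (Nat.eqb (i1 i) j) eqn:E1; destruct (Nat.eqb (i2 p i) j) eqn:E2.
    - apply Nat.eqb_eq in E1. apply Nat.eqb_eq in E2. lia.
    - apply Nat.eqb_eq in E1. subst j. rewrite P2. apply Hsep. rewrite P1 in Ht.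
      pose proof (HXs (Z.of_nat i + 1)%Z) as H. replace (Z.of_nat i + 1 + 1)%Z with (Z.of_nat i + 2)%Z in H by lia.
      replace (X (Z.of_nat i + 2)%Z - t - dl) with (- (t - X (Z.of_nat i + 1)%Z)) by lra. rewrite Rabs_Ropp; auto.
    - apply Nat.eqb_eq in E2. subst j. rewrite P1. apply Hsep.
      pose proof (HXs (Z.of_nat i + 1)%Z) as H. replace (Z.of_nat i + 1 + 1)%Z with (Z.of_nat i + 2)%Z in H by lia.
      replace (t + cc p q i - X (Z.of_nat i + 1)%Z - dl) with (t - vecX X (i2 p i)) by lra. auto.
    - rewrite P1, P2. apply Hsep. 
      pose proof (HXs (Z.of_nat i + 1)%Z) as H. replace (Z.of_nat i + 1 + 1)%Z with (Z.of_nat i + 2)%Z in H by lia.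
      rewrite H, Rminus_diag, Rabs_R0. auto. }
  assert (Hhess : forall j k, (1 <= j <= p)%nat -> (1 <= k <= p)%nat ->
        hess (Wpq g p q) (vecX X) j k = circ p alpha beta j k).
  { intros j k Hj Hk. rewrite (hess_W g p q (vecX X) j k r); auto.
    apply hsum_circ; auto. intros i Hi. destruct (Hpair i Hi) as [P1 P2]. rewrite P1, P2.
    replace (Z.of_nat i + 2)%Z with (Z.of_nat i + 1 + 1)%Z by lia. auto. }
  exists alpha, beta. split; [|split; [|split]].
  - intros i. split; [|split]; auto. 
  - exact Hhess.
  - intros N j Hj.
    assert (Hp0 : 0 < INR p) by (apply lt_0_INR; lia).
    set (th := 2 * PI * IZR N / INR p).
    assert (Hth : th * INR p = 2 * IZR N * PI) by (unfold th; field; lra).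
    assert (Hc : forall (h : R -> R), (forall x, h (x - th) + h (x + th) = 2 * cos th * h x) ->
              (forall x, h (x + th * INR p) = h x) ->
      sumR (fun k => hess (Wpq g p q) (vecX X) j (S k) * h (2 * PI * IZR N * INR (S k) / INR p)) p
      = (2 * alpha + 2 * beta * cos (2 * PI * IZR N / INR p)) * h (2 * PI * IZR N * INR j / INR p)).
    { intros h H1 H2.
      rewrite (sumR_ext _ (fun k => circ p alpha beta j (S k) * h (th * INR (S k)))).
      - rewrite circ_eigen; auto. f_equal. unfold th. f_equal. field. lra.
      - intros k Hk. rewrite Hhess by lia. f_equal. f_equal. unfold th. field. lra. }
    split; apply Hc.
    + intros x. rewrite sin_minus, sin_plus. ring.
    + intros x. rewrite Hth. apply sinZ.
    + intros x. rewrite cos_minus, cos_plus. ring.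
    + intros x. rewrite Hth. apply cosZ.
  - intros c Hc i.
    assert (Hcpos : 0 < c).
    { pose proof (Himm 0) as H0. pose proof (pnorm_sq _ _ (Hc 0)) as H1.
      assert (0 <= c) by (rewrite <- (Hc 0); unfold pnorm; apply sqrt_pos).
      destruct (Rle_lt_or_eq_dec _ _ H) as [H2|H2]; auto. exfalso. apply H0.
      subst c. unfold dvel in *; simpl in *. apply pt_eq; simpl; nra. }
    set (sn := sin (INR m * PI / INR n)).
    assert (Hsn : 0 < sn).
    { unfold sn. apply sin_gt_0.
      - apply Rmult_lt_0_compat; [apply Rmult_lt_0_compat; [|apply PI_RGT_0] | apply Rinv_0_lt_compat]; try lra.
        apply lt_0_INR; lia.
      - replace (INR m * PI / INR n) with (dl * PI) by (unfold dl; field; lra).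
        pose proof PI_RGT_0. nra. }
    set (ph := 2 * PI * IZR (Z.of_nat m) / INR n).
    assert (Hph : cos ph = 1 - 2 * sn ^ 2).
    { unfold ph, sn. rewrite <- INR_IZR_INZ.
      replace (2 * PI * INR m / INR n) with (2 * (INR m * PI / INR n)) by (field; lra).
      rewrite cos_2a_sin. ring. }
    assert (Hnext : forall j, g (X (j + 1)%Z) = rot ph (g (X j))).
    { intros j. rewrite Hstep. unfold dl. rewrite INR_IZR_INZ. unfold ph. apply (gshift_Z g n Hnr Hrot). }
    assert (Hprev : forall j, g (X (j - 1)%Z) = rot (- ph) (g (X j))).
    { intros j. replace j with ((j - 1) + 1)%Z at 2 by lia. rewrite Hnext, rot_rot.
      replace (- ph + ph) with 0 by ring. rewrite rot_0. auto. }
    assert (Hperp : forall j, dot (g (X j)) (dvel g (X j)) = 0).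
    { intros j. destruct (centerX m n g X Hnr Hinj Hrefl Hstep Hsym j) as [z [a Hza]].
      apply (perp g (X j) (IZR z + IZR a / INR n)); auto.
      intros t. apply (dot_center n g Hnr Hper Hrot Hrefl). }
    assert (Hgeo : forall j, cross (dvel g (X j)) (psub (g (X (j + 1)%Z)) (g (X j))) = c * Lf g (X (j + 1)%Z) (X j) * sn /\
                             cross (dvel g (X j)) (psub (g (X j)) (g (X (j - 1)%Z))) = - c * Lf g (X j) (X (j - 1)%Z) * sn).
    { intros j. unfold Lf. rewrite Hnext, Hprev. apply geo_core; auto.
      rewrite <- Hnext. apply Hconv. intros k Hk. rewrite HXs in Hk.
      apply (no_int_01 k). rewrite <- Hk. auto. }
    assert (HLsh : forall j, Lf g (X (j - 1)%Z) (X j) = Lf g (X j) (X (j + 1)%Z)).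
    { intros j. assert (E1 : X j = X (j - 1)%Z + IZR (Z.of_nat m) / INR n).
      { pose proof (HXs (j - 1)%Z) as H. replace (j - 1 + 1)%Z with j in H by lia. rewrite <- INR_IZR_INZ. unfold dl in H. lra. }
      assert (E2 : X (j + 1)%Z = X j + IZR (Z.of_nat m) / INR n).
      { rewrite <- INR_IZR_INZ. apply Hstep. }
      rewrite E2. rewrite E1 at 2. rewrite Lf_shift; auto. }
    assert (HLpos : forall j, 0 < Lf g (X j) (X (j + 1)%Z)).
    { intros j. apply Dsq_pos_L. apply Hsep. rewrite HXs, Rminus_diag, Rabs_R0; auto. }
    split.
    + rewrite <- (Hd22 i). rewrite (d22_eq g _ _ r); auto.
      * change (pnorm (psub (g (X (i + 1)%Z)) (g (X i)))) with (Lf g (X (i + 1)%Z) (X i)).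
        rewrite (Lf_sym g (X (i + 1)%Z)), <- HLsh.
        apply alpha_alg; auto.
        -- apply (speed_perp g c Hs Hc).
        -- rewrite HLsh; auto.
        -- destruct (Hgeo i) as [_ G]. rewrite G, Lf_sym. ring.
      * intros t Ht. apply Hsep. pose proof (HXs (i - 1)%Z) as H. replace (i - 1 + 1)%Z with i in H by lia.
        replace (t - X (i - 1)%Z - dl) with (t - X i) by lra. auto.
    + rewrite <- (Hb i). rewrite (d12_eq g _ _ r); auto.
      * change (pnorm (psub (g (X (i + 1)%Z)) (g (X i)))) with (Lf g (X (i + 1)%Z) (X i)).
        rewrite (Lf_sym g (X (i + 1)%Z)).
        apply beta_alg; auto.
        -- destruct (Hgeo i) as [G _]. rewrite G, Lf_sym. ring.
        -- destruct (Hgeo (i + 1)%Z) as [_ G]. replace (i + 1 - 1)%Z with i in G by lia. rewrite G, Lf_sym. ring.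
      * intros t Ht. apply Hsep. rewrite <- (HXs i). replace (X (i + 1)%Z - t - (X (i + 1)%Z - X i)) with (- (t - X i)) by ring.
        rewrite Rabs_Ropp. auto.
Qed.
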